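(* For $(\alpha,\beta)\in\mathbb{R}^2$, let $\mathfrak{m}_{\alpha,\beta}$ be the $8$-dimensional real Lie algebra with a basis $\{v^1,\dots,v^8\}$ of its dual satisfying $$dv^1=dv^2=dv^3=0,\quad dv^4=v^{13},\quad dv^5=v^{23},\quad dv^6=v^{14}+v^{25}-v^{35},$$ $$dv^7=\alpha v^{12}+v^{15}+v^{24}+v^{34},\quad dv^8=v^{16}-2\beta v^{25}+v^{27}-\beta v^{35}-v^{45},$$ and let $\{v'^1,\dots,v'^8\}$ be the analogous basis of $\mathfrak{m}_{\alpha',\beta'}^*$. Suppose $f:\mathfrak{m}_{\alpha,\beta}\to\mathfrak{m}_{\alpha',\beta'}$ is a Lie algebra isomorphism and let $F:\bigwedge^*\mathfrak{m}_{\alpha',\beta'}^*\to\bigwedge^*\mathfrak{m}_{\alpha,\beta}^*$ be the extension of its dual, written $F(v'^i)=\sum_{j=1}^8\lambda^i_j v^j$. Then $$\alpha'=\pm\lambda^1_1\,\alpha,\qquad \beta'=\lambda^1_1\,\beta.$$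
   Context: $v^{ij}=v^i\wedge v^j$ and $d$ is the Chevalley–Eilenberg differential; $F$ commutes with $d$. *)

(* Defs.v *)
From HB Require Import structures.
From mathcomp Require Import all_boot all_order all_algebra.
From mathcomp Require Import reals.
Set Implicit Arguments. Unset Strict Implicit. Unset Printing Implicit Defensive.
Import Order.TTheory GRing.Theory Num.Theory.
Local Open Scope ring_scope.

(* The Lie algebra m_{alpha,beta} is modelled on column vectors 'cV[R]_8,
   with standard basis e_1..e_8 (0-indexed: e_0..e_7) dual to v^1..v^8.
   [d_terms a b k] lists the terms (i, j, c) with i < j, meaning c * v^{(i+1)(j+1)},
   of d v^{k+1}  (0-indexed). *)
Definition d_terms {R : realType} (a b : R) (k : nat) : seq (nat * nat * R) :=
  match k with
  | 3 => [:: (0, 2, 1)]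
  | 4 => [:: (1, 2, 1)]
  | 5 => [:: (0, 3, 1); (1, 4, 1); (2, 4, -1)]
  | 6 => [:: (0, 1, a); (0, 4, 1); (1, 3, 1); (2, 3, 1)]
  | 7 => [:: (0, 5, 1); (1, 4, -(2 * b)); (1, 6, 1); (2, 4, - b); (3, 4, -1)]
  | _ => [::]
  end.

(* dv^{k+1}(e_i, e_j), with the convention v^{pq}(e_p,e_q) = 1 = - v^{pq}(e_q,e_p). *)
Definition dcoef {R : realType} (a b : R) (k i j : 'I_8) : R :=
  \sum_(t <- d_terms a b k)
     t.2 * (((i == t.1.1 :> nat) && (j == t.1.2 :> nat))%:R
            - ((i == t.1.2 :> nat) && (j == t.1.1 :> nat))%:R).

(* Lie bracket of m_{a,b}, determined by the Chevalley-Eilenberg convention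
   d theta (x, y) = - theta ([x, y]) for 1-forms theta. *)
Definition mbracket {R : realType} (a b : R) (x y : 'cV[R]_8) : 'cV[R]_8 :=
  \col_(k < 8) - \sum_(i < 8) \sum_(j < 8) dcoef a b k i j * x i 0 * y j 0.

(* A linear map f : m_{a,b} -> m_{a',b'} given by its matrix M (f x = M *m x)
   is a Lie algebra isomorphism. The dual map F satisfies
   F(v'^i) = v'^i o f = \sum_j M i j v^j, so lambda^i_j = M i j. *)
Definition lie_iso {R : realType} (a b a' b' : R) (M : 'M[R]_8) : Prop :=
  M \in unitmx /\
  forall x y : 'cV[R]_8, M *m mbracket a b x y = mbracket a' b' (M *m x) (M *m y).

(* Main.v *)
Require Import Defs.
From HB Require Import structures.
From mathcomp Require Import all_boot all_order all_algebra.
From mathcomp Require Import reals lra ring.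
Set Implicit Arguments. Unset Strict Implicit. Unset Printing Implicit Defensive.
Import Order.TTheory GRing.Theory Num.Theory.
Local Open Scope ring_scope.

Section S.
Variable R : realType.

Definition Bt (a b : R) (X Y : nat -> R) (k : nat) : R :=
  \sum_(t <- d_terms a b k) t.2 * (X t.1.1 * Y t.1.2 - X t.1.2 * Y t.1.1).

Lemma d_terms_small (a b : R) (k : nat) :
  all (fun t : nat * nat * R => (t.1.1 < 8)%N && (t.1.2 < 8)%N) (d_terms a b k).
Proof. by do 8?[case: k => [|k]] => //. Qed.

Lemma sum_delta (p q : nat) (f : 'I_8 -> 'I_8 -> R) : (p < 8)%N -> (q < 8)%N ->
  \sum_(i < 8) \sum_(j < 8) (((i == p :> nat) && (j == q :> nat))%:R * f i j)
  = f (inord p) (inord q).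
Proof.
move=> hp hq.
rewrite (bigD1 (inord p)) //= [X in _ + X]big1 => [|i hi]; last first.
  apply: big1 => j _.
  have -> : (i == p :> nat) = false.
    by apply/negbTE; apply: contra hi => /eqP <-; rewrite inord_val.
  by rewrite mul0r.
rewrite addr0 (bigD1 (inord q)) //= [X in _ + X]big1 => [|j hj]; last first.
  have -> : (j == q :> nat) = false.
    by apply/negbTE; apply: contra hj => /eqP <-; rewrite inord_val.
  by rewrite andbF mul0r.
by rewrite !inordK // !eqxx mul1r addr0.
Qed.

Lemma mbracketE (a b : R) (x y : 'cV[R]_8) (k : 'I_8) :
  mbracket a b x y k 0 = - Bt a b (fun n => x (inord n) 0) (fun n => y (inord n) 0) k.
Proof.
rewrite mxE; congr (- _).
rewrite /Bt /dcoef.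
transitivity (\sum_(i < 8) \sum_(t <- d_terms a b k) \sum_(j < 8)
   t.2 * ((((i == t.1.1 :> nat) && (j == t.1.2 :> nat))%:R - ((i == t.1.2 :> nat) && (j == t.1.1 :> nat))%:R) * (x i 0 * y j 0))).
  apply: eq_bigr => i _; rewrite exchange_big /=; apply: eq_bigr => j _.
  by rewrite !big_distrl /=; apply: eq_bigr => t _; rewrite !mulrA.
rewrite exchange_big /=.
rewrite big_seq_cond [RHS]big_seq_cond; apply: eq_bigr => t /andP[ht _].
have /allP /(_ t ht) /andP[h1 h2] := d_terms_small a b k.
transitivity (t.2 * (\sum_(i < 8) \sum_(j < 8) (((i == t.1.1 :> nat) && (j == t.1.2 :> nat))%:R * (x i 0 * y j 0))
   - \sum_(i < 8) \sum_(j < 8) (((i == t.1.2 :> nat) && (j == t.1.1 :> nat))%:R * (x i 0 * y j 0)))).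
  rewrite -sumrB mulr_sumr; apply: eq_bigr => i _.
  rewrite -sumrB mulr_sumr; apply: eq_bigr => j _.
  by rewrite -mulrBl.
by rewrite !(sum_delta (fun i j => x i 0 * y j 0)).
Qed.


Lemma Bt_ext (a b : R) (X Y X' Y' : nat -> R) k :
  (forall n, (n < 8)%N -> X n = X' n) -> (forall n, (n < 8)%N -> Y n = Y' n) ->
  Bt a b X Y k = Bt a b X' Y' k.
Proof.
move=> hX hY; rewrite /Bt big_seq_cond [RHS]big_seq_cond; apply: eq_bigr => t /andP[ht _].
have /allP /(_ t ht) /andP[h1 h2] := d_terms_small a b k.
by rewrite !hX // !hY.
Qed.

Definition ev (p : nat) : 'cV[R]_8 := \col_(i < 8) ((i == p :> nat)%:R).
Definition ml (M : 'M[R]_8) (i j : nat) := M (inord i) (inord j).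

Lemma Mev (M : 'M[R]_8) p n : (p < 8)%N -> (M *m ev p) (inord n) 0 = ml M n p.
Proof.
move=> hp; rewrite mxE (bigD1 (inord p)) //= [X in _ + X]big1 => [|j hj].
  by rewrite mxE inordK // eqxx mulr1 addr0.
rewrite mxE; have -> : (j == p :> nat) = false.
  by apply/negbTE; apply: contra hj => /eqP <-; rewrite inord_val.
by rewrite mulr0.
Qed.

Lemma evE p n : (n < 8)%N -> ev p (inord n) 0 = (n == p)%:R.
Proof. by move=> hn; rewrite mxE inordK. Qed.

Lemma Eq (a b a' b' : R) (M : 'M[R]_8) :
  (forall x y, M *m mbracket a b x y = mbracket a' b' (M *m x) (M *m y)) ->
  forall k p q, (k < 8)%N -> (p < 8)%N -> (q < 8)%N ->
  \sum_(0 <= j < 8) ml M k j * Bt a b (fun n => (n == p)%:R) (fun n => (n == q)%:R) j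
  = Bt a' b' (fun n => ml M n p) (fun n => ml M n q) k.
Proof.
move=> H k p q hk hp hq.
have := congr1 (fun A : 'cV[R]_8 => A (inord k) 0) (H (ev p) (ev q)).
rewrite mbracketE inordK // mxE => e.
rewrite (@Bt_ext _ _ _ _ (fun n => (M *m ev p) (inord n) 0) (fun n => (M *m ev q) (inord n) 0)); last 2 first.
  by move=> n hn; rewrite Mev.
  by move=> n hn; rewrite Mev.
apply: oppr_inj; rewrite -e big_mkord -sumrN; apply: eq_bigr => j _.
rewrite mbracketE mulrN /ml inord_val; congr (- (_ * _)).
by apply: Bt_ext => n hn; rewrite evE.
Qed.

Lemma prod_entry (A B : 'M[R]_8) i l : (i < 8)%N -> (l < 8)%N ->
  (A *m B) (inord i) (inord l) = \sum_(0 <= j < 8) ml A i j * ml B j l.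
Proof. by move=> hi hl; rewrite mxE big_mkord; apply: eq_bigr => j _; rewrite /ml inord_val. Qed.

Lemma id_entry i l : (i < 8)%N -> (l < 8)%N ->
  (1%:M : 'M[R]_8) (inord i) (inord l) = (i == l)%:R.
Proof.
move=> hi hl; rewrite mxE; congr (_%:R).
by rewrite -(inj_eq val_inj) /= !inordK.
Qed.

End S.

Lemma nat0 : (0%R : nat) = 0%N. Proof. by []. Qed.
Lemma nat1 : (1%R : nat) = 1%N. Proof. by []. Qed.

Ltac zap e := repeat match goal with
  | h : ml ?M ?i ?j = _ |- _ => lazymatch type of e with context[ml M i j] => rewrite h in e end end.
Arguments Eq {R a b a' b' M} _ k%_nat_scope p%_nat_scope q%_nat_scope _ _ _.
Ltac getE t := let e := fresh "e" in
  have e := t erefl erefl erefl;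
  rewrite /Bt /index_iota /= !big_cons !big_nil /= ?natn ?nat0 ?nat1 in e; zap e.

Section Iso.
Variables (R : realType) (a b a' b' : R) (M : 'M[R]_8).
Hypothesis H : forall x y, M *m mbracket a b x y = mbracket a' b' (M *m x) (M *m y).

Lemma zrow i : (i < 3)%N ->
  [/\ ml M i 3 = 0, ml M i 4 = 0, ml M i 5 = 0, ml M i 6 = 0 & ml M i 7 = 0].
Proof.
case: i => [|[|[|]]] // _.
- have ? : ml M 0 3 = 0 by getE (Eq H 0 0 2); lra.
  have ? : ml M 0 4 = 0 by getE (Eq H 0 1 2); lra.
  have ? : ml M 0 5 = 0 by getE (Eq H 0 0 3); lra.
  have ? : ml M 0 6 = 0 by getE (Eq H 0 0 4); lra.
  have ? : ml M 0 7 = 0 by getE (Eq H 0 0 5); lra.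
  by split.
- have ? : ml M 1 3 = 0 by getE (Eq H 1 0 2); lra.
  have ? : ml M 1 4 = 0 by getE (Eq H 1 1 2); lra.
  have ? : ml M 1 5 = 0 by getE (Eq H 1 0 3); lra.
  have ? : ml M 1 6 = 0 by getE (Eq H 1 0 4); lra.
  have ? : ml M 1 7 = 0 by getE (Eq H 1 0 5); lra.
  by split.
- have ? : ml M 2 3 = 0 by getE (Eq H 2 0 2); lra.
  have ? : ml M 2 4 = 0 by getE (Eq H 2 1 2); lra.
  have ? : ml M 2 5 = 0 by getE (Eq H 2 0 3); lra.
  have ? : ml M 2 6 = 0 by getE (Eq H 2 0 4); lra.
  have ? : ml M 2 7 = 0 by getE (Eq H 2 0 5); lra.
  by split.
Qed.

Lemma zmid :
  [/\ [/\ ml M 3 5 = 0, ml M 3 6 = 0, ml M 3 7 = 0, ml M 4 5 = 0 & ml M 4 6 = 0],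
      [/\ ml M 4 7 = 0, ml M 5 7 = 0 & ml M 6 7 = 0] &
      ml M 0 0 * ml M 2 1 = ml M 2 0 * ml M 0 1 /\ ml M 1 0 * ml M 2 1 = ml M 2 0 * ml M 1 1].
Proof.
have [? ? ? ? ?] := @zrow 0%N erefl.
have [? ? ? ? ?] := @zrow 1%N erefl.
have [? ? ? ? ?] := @zrow 2%N erefl.
have ? : ml M 3 5 = 0 by getE (Eq H 3 0 3); lra.
have ? : ml M 3 6 = 0 by getE (Eq H 3 0 4); lra.
have ? : ml M 3 7 = 0 by getE (Eq H 3 0 5); lra.
have ? : ml M 4 5 = 0 by getE (Eq H 4 0 3); lra.
have ? : ml M 4 6 = 0 by getE (Eq H 4 0 4); lra.
have ? : ml M 4 7 = 0 by getE (Eq H 4 0 5); lra.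
have ? : ml M 5 7 = 0 by getE (Eq H 5 0 5); lra.
have ? : ml M 6 7 = 0 by getE (Eq H 6 0 5); lra.
split => //; split.
- by getE (Eq H 3 0 1); lra.
- by getE (Eq H 4 0 1); lra.
Qed.

End Iso.

Lemma cancel1 (R : realType) (s x : R) : s != 0 -> s * x = 0 -> x = 0.
Proof. by move=> hs /eqP; rewrite mulf_eq0 (negbTE hs) => /eqP. Qed.

Lemma alg1 (R : realType) (x y z w s m02 m12 : R) : s != 0 -> x * w - y * z != 0 ->
  s * (x ^+ 2 + z ^+ 2) = s * (y ^+ 2 + w ^+ 2) ->
  s * (x * y + z * w) = s * (m02 * x + m12 * z - s * z) ->
  - (s * (x ^+ 2 + z ^+ 2)) = s * (m02 * y + m12 * w - s * w) ->
  2 * s * x * z = 2 * s * y * w ->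
  s ^+ 2 * (x * w - y * z) = x * (s * (x ^+ 2 + z ^+ 2)) + z * (2 * s * x * z) ->
  s ^+ 2 * (x * w - y * z) = y * (s * (x * y + z * w)) + w * (s * (x * w + z * y)) ->
  0 = y * (s * (x ^+ 2 + z ^+ 2)) + w * (2 * s * x * z) ->
  [/\ y = 0, z = 0, w = s, m02 = 0 & m12 = 0] /\ (x != 0 /\ x ^+ 2 = s ^+ 2).
Proof.
move=> s0 D0 q55 q56 q55b q65 q16 q27 q26.
have c1 : x ^+ 2 + z ^+ 2 = y ^+ 2 + w ^+ 2.
  by apply/eqP; rewrite -subr_eq0; apply/eqP; apply: (cancel1 s0); lra.
have c2 : x * z = y * w.
  by apply/eqP; rewrite -subr_eq0; apply/eqP; apply: (cancel1 s0); lra.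
have c3 : y * (x ^+ 2 + z ^+ 2) + 2 * w * (x * z) = 0 by apply: (cancel1 s0); lra.
have e1 : y * (x ^+ 2 + z ^+ 2) = y * (y ^+ 2 + w ^+ 2) by rewrite c1.
have e2 : w * (x * z) = w * (y * w) by rewrite c2.
have c4 : y * (y ^+ 2 + 3 * w ^+ 2) = 0 by lra.
have y0 : y = 0.
  move/eqP: c4; rewrite mulf_eq0 => /orP[/eqP //|/eqP c5].
  have := sqr_ge0 y; have := sqr_ge0 w => h1 h2.
  have : y ^+ 2 = 0 by lra.
  by move/eqP; rewrite sqrf_eq0 => /eqP.
rewrite y0 mul0r subr0 in D0.
have x0 : x != 0 by apply: contraNneq D0 => ->; rewrite mul0r.
have w0 : w != 0 by apply: contraNneq D0 => ->; rewrite mulr0.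
have z0 : z = 0 by apply: (cancel1 x0); rewrite c2 y0 mul0r.
have sw : s * w = x ^+ 2.
  apply/eqP; rewrite -subr_eq0; apply/eqP; apply: (cancel1 s0); apply: (cancel1 x0).
  move: q16; rewrite z0 y0; lra.
have ws : w = s.
  apply/eqP; rewrite -subr_eq0; apply/eqP; apply: (cancel1 s0); apply: (cancel1 x0); apply: (cancel1 w0).
  move: q27; rewrite z0 y0; lra.
have xs : x ^+ 2 = s ^+ 2 by rewrite -sw ws.
have m020 : m02 = 0.
  apply: (cancel1 s0); apply: (cancel1 x0); move: q56; rewrite z0 y0; lra.
have m120 : m12 = 0.
  apply: (cancel1 s0); apply: (cancel1 s0); move: q55b; rewrite z0 ws y0 expr0n addr0 xs; lra.
by [].
Qed.

Lemma alg2 (R : realType) (x s a a' b b' p30 p31 p32 p40 p41 p42 : R) :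
  s != 0 -> x != 0 -> x ^+ 2 = s ^+ 2 ->
  x * (s * p42 + s * p41) - s ^+ 2 * p30 = x * s * p42 ->
  x * p31 = s * p40 ->
  a * (s * (x * s)) = a' * (x * s) + x * p41 - s * p30 ->
  x * (x * p32 + s * p40) + x * s * p40 - 2 * b * (s ^+ 2 * (x * s)) =
    - (2 * b' * s ^+ 3) + s * (s * p32 - s * p31) - s ^+ 2 * p31 ->
  - (x * (x * p32 + s * p40) + x * s * p40) - b * (s ^+ 2 * (x * s)) =
    - (b' * s ^+ 3) - s ^+ 2 * p32 ->
  (a' = x * a \/ a' = - (x * a)) /\ b' = x * b.
Proof.
move=> s0 x0 xs eB0 eA eAl V25 V35.
have eB : x * p41 = s * p30.
  by apply/eqP; rewrite -subr_eq0; apply/eqP; apply: (cancel1 s0); lra.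
have xs0 : x * s != 0 by rewrite mulf_neq0.
have ha : a' = a * s.
  apply/eqP; rewrite -subr_eq0; apply/eqP; apply: (cancel1 xs0); lra.
have k1 : x * (s * p40) = s ^+ 2 * p31 by rewrite -eA mulrA -expr2 xs.
have k2 : x ^+ 2 * p32 = s ^+ 2 * p32 by rewrite xs.
have s30 : s ^+ 3 != 0 by rewrite expf_neq0.
split.
  have : (s - x) * (s + x) = 0 by rewrite -subr_sqr xs subrr.
  move/eqP; rewrite mulf_eq0 => /orP[/eqP h|/eqP h].
    left; have hs : s = x by lra.
    by rewrite ha hs mulrC.
  right; have hs : s = - x by lra.
  by rewrite ha hs mulrN mulrC.
apply/eqP; rewrite -subr_eq0; apply/eqP; apply: (cancel1 s30); lra.
Qed.

Lemma core (R : realType) (a b a' b' : R) (M : 'M[R]_8) :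
  (forall x y, M *m mbracket a b x y = mbracket a' b' (M *m x) (M *m y)) ->
  ml M 2 0 = 0 -> ml M 2 1 = 0 -> ml M 2 2 != 0 ->
  ml M 0 0 * ml M 1 1 - ml M 0 1 * ml M 1 0 != 0 ->
  (a' = ml M 0 0 * a \/ a' = - (ml M 0 0 * a)) /\ b' = ml M 0 0 * b.
Proof.
move=> H z20 z21 s0 D0.
have [? ? ? ? ?] := @zrow _ _ _ _ _ _ H 0%N erefl.
have [? ? ? ? ?] := @zrow _ _ _ _ _ _ H 1%N erefl.
have [? ? ? ? ?] := @zrow _ _ _ _ _ _ H 2%N erefl.
have [[? ? ? ? ?] [? ? ?] _] := zmid H.
have h33 : ml M 3 3 = ml M 0 0 * (ml M 2 2) by getE (Eq H 3 0 2); lra.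
have h34 : ml M 3 4 = ml M 0 1 * (ml M 2 2) by getE (Eq H 3 1 2); lra.
have h43 : ml M 4 3 = ml M 1 0 * (ml M 2 2) by getE (Eq H 4 0 2); lra.
have h44 : ml M 4 4 = ml M 1 1 * (ml M 2 2) by getE (Eq H 4 1 2); lra.
have h55 : ml M 5 5 = (ml M 2 2) * (ml M 0 0 ^+ 2 + ml M 1 0 ^+ 2) by getE (Eq H 5 0 3); lra.
have q55 : (ml M 2 2) * (ml M 0 0 ^+ 2 + ml M 1 0 ^+ 2) = (ml M 2 2) * (ml M 0 1 ^+ 2 + ml M 1 1 ^+ 2).
  by getE (Eq H 5 1 4); lra.
have h56 : ml M 5 6 = (ml M 2 2) * (ml M 0 0 * ml M 0 1 + ml M 1 0 * ml M 1 1) by getE (Eq H 5 0 4); lra.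
have q56 : (ml M 2 2) * (ml M 0 0 * ml M 0 1 + ml M 1 0 * ml M 1 1) = (ml M 2 2) * (ml M 0 2 * ml M 0 0 + ml M 1 2 * ml M 1 0 - (ml M 2 2) * ml M 1 0).
  by getE (Eq H 5 2 3); lra.
have q55b : - ((ml M 2 2) * (ml M 0 0 ^+ 2 + ml M 1 0 ^+ 2)) = (ml M 2 2) * (ml M 0 2 * ml M 0 1 + ml M 1 2 * ml M 1 1 - (ml M 2 2) * ml M 1 1).
  by getE (Eq H 5 2 4); lra.
have h65 : ml M 6 5 = 2 * (ml M 2 2) * ml M 0 0 * ml M 1 0 by getE (Eq H 6 0 3); lra.
have q65 : 2 * (ml M 2 2) * ml M 0 0 * ml M 1 0 = 2 * (ml M 2 2) * ml M 0 1 * ml M 1 1 by getE (Eq H 6 1 4); lra.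
have h66 : ml M 6 6 = (ml M 2 2) * (ml M 0 0 * ml M 1 1 + ml M 1 0 * ml M 0 1) by getE (Eq H 6 0 4); lra.
have h77 : ml M 7 7 = (ml M 2 2) ^+ 2 * (ml M 0 0 * ml M 1 1 - ml M 0 1 * ml M 1 0) by getE (Eq H 7 3 4); lra.
have q16 : (ml M 2 2) ^+ 2 * (ml M 0 0 * ml M 1 1 - ml M 0 1 * ml M 1 0) =
   ml M 0 0 * ((ml M 2 2) * (ml M 0 0 ^+ 2 + ml M 1 0 ^+ 2)) + ml M 1 0 * (2 * (ml M 2 2) * ml M 0 0 * ml M 1 0).
  by getE (Eq H 7 0 5); lra.
have q27 : (ml M 2 2) ^+ 2 * (ml M 0 0 * ml M 1 1 - ml M 0 1 * ml M 1 0) =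
   ml M 0 1 * ((ml M 2 2) * (ml M 0 0 * ml M 0 1 + ml M 1 0 * ml M 1 1)) + ml M 1 1 * ((ml M 2 2) * (ml M 0 0 * ml M 1 1 + ml M 1 0 * ml M 0 1)).
  by getE (Eq H 7 1 6); lra.
have q26 : 0 = ml M 0 1 * ((ml M 2 2) * (ml M 0 0 ^+ 2 + ml M 1 0 ^+ 2)) + ml M 1 1 * (2 * (ml M 2 2) * ml M 0 0 * ml M 1 0).
  by getE (Eq H 7 1 5); lra.
have [[y0 z0 ws m02 m12] [x0 xs]] := alg1 s0 D0 q55 q56 q55b q65 q16 q27 q26.
clear q55 q56 q55b q65 q16 q27 q26.
have g54 : ml M 5 4 = ml M 2 2 * ml M 4 2 + ml M 2 2 * ml M 4 1 by getE (Eq H 5 1 2); lra.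
have g76 : ml M 7 6 = ml M 0 0 * (ml M 2 2 * ml M 4 2 + ml M 2 2 * ml M 4 1) - ml M 2 2 ^+ 2 * ml M 3 0.
  by getE (Eq H 7 0 4); lra.
have eB0 : ml M 0 0 * (ml M 2 2 * ml M 4 2 + ml M 2 2 * ml M 4 1) - ml M 2 2 ^+ 2 * ml M 3 0
   = ml M 0 0 * ml M 2 2 * ml M 4 2 by getE (Eq H 7 2 3); lra.
have eA : ml M 0 0 * ml M 3 1 = ml M 2 2 * ml M 4 0 by getE (Eq H 5 0 1); lra.
have eAl : a * (ml M 2 2 * (ml M 0 0 * ml M 2 2)) = a' * (ml M 0 0 * ml M 2 2) + ml M 0 0 * ml M 4 1 - ml M 2 2 * ml M 3 0.
  by getE (Eq H 6 0 1); lra.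
have g53 : ml M 5 3 = ml M 0 0 * ml M 3 2 + ml M 2 2 * ml M 4 0 by getE (Eq H 5 0 2); lra.
have g75 : ml M 7 5 = ml M 0 0 * (ml M 0 0 * ml M 3 2 + ml M 2 2 * ml M 4 0) + ml M 0 0 * ml M 2 2 * ml M 4 0.
  by getE (Eq H 7 0 3); lra.
have g64 : ml M 6 4 = ml M 2 2 * ml M 3 2 - ml M 2 2 * ml M 3 1 by getE (Eq H 6 1 2); lra.
have V25 : ml M 0 0 * (ml M 0 0 * ml M 3 2 + ml M 2 2 * ml M 4 0) + ml M 0 0 * ml M 2 2 * ml M 4 0
    - 2 * b * (ml M 2 2 ^+ 2 * (ml M 0 0 * ml M 2 2)) =
    - (2 * b' * ml M 2 2 ^+ 3) + ml M 2 2 * (ml M 2 2 * ml M 3 2 - ml M 2 2 * ml M 3 1) - ml M 2 2 ^+ 2 * ml M 3 1.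
  by getE (Eq H 7 1 4); lra.
have V35 : - (ml M 0 0 * (ml M 0 0 * ml M 3 2 + ml M 2 2 * ml M 4 0) + ml M 0 0 * ml M 2 2 * ml M 4 0)
    - b * (ml M 2 2 ^+ 2 * (ml M 0 0 * ml M 2 2)) =
    - (b' * ml M 2 2 ^+ 3) - ml M 2 2 ^+ 2 * ml M 3 2.
  by getE (Eq H 7 2 4); lra.
exact: alg2 s0 x0 xs eB0 eA eAl V25 V35.
Qed.

Ltac getS t := let e := fresh "e" in
  have e := t erefl erefl;
  rewrite /index_iota /= !big_cons !big_nil /= in e; zap e.

Unset Implicit Arguments.
Theorem lemma3p6 (R : realType) (alpha beta alpha' beta' : R) (M : 'M[R]_8) :
  lie_iso alpha beta alpha' beta' M ->
  (alpha' = M ord0 ord0 * alpha \/ alpha' = - (M ord0 ord0 * alpha)) /\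
  beta' = M ord0 ord0 * beta.
Proof.
move=> [Mu H].
set N := invmx M.
have HN : forall x y, N *m mbracket alpha' beta' x y = mbracket alpha beta (N *m x) (N *m y).
  move=> x y; have := H (N *m x) (N *m y); rewrite !mulKVmx // => e.
  by rewrite -e mulKmx.
have [? ? ? ? ?] := @zrow _ _ _ _ _ _ H 0%N erefl.
have [? ? ? ? ?] := @zrow _ _ _ _ _ _ H 1%N erefl.
have [? ? ? ? ?] := @zrow _ _ _ _ _ _ H 2%N erefl.
have [? ? ? ? ?] := @zrow _ _ _ _ _ _ HN 0%N erefl.
have [? ? ? ? ?] := @zrow _ _ _ _ _ _ HN 1%N erefl.
have [? ? ? ? ?] := @zrow _ _ _ _ _ _ HN 2%N erefl.
have [[? ? ? ? ?] [? ? ?] [m1 m2]] := zmid H.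
have [[? ? ? ? ?] [? ? ?] [n1 n2]] := zmid HN.
have NM i l : (i < 8)%N -> (l < 8)%N -> \sum_(0 <= j < 8) ml N i j * ml M j l = (i == l)%:R.
  by move=> hi hl; rewrite -prod_entry // mulVmx // id_entry.
have MN i l : (i < 8)%N -> (l < 8)%N -> \sum_(0 <= j < 8) ml M i j * ml N j l = (i == l)%:R.
  by move=> hi hl; rewrite -prod_entry // mulmxV // id_entry.
have e00 : ml N 0 0 * ml M 0 0 + ml N 0 1 * ml M 1 0 + ml N 0 2 * ml M 2 0 = 1.
  by getS (NM 0%N 0%N); lra.
have e01 : ml N 0 0 * ml M 0 1 + ml N 0 1 * ml M 1 1 + ml N 0 2 * ml M 2 1 = 0.
  by getS (NM 0%N 1%N); lra.
have e10 : ml N 1 0 * ml M 0 0 + ml N 1 1 * ml M 1 0 + ml N 1 2 * ml M 2 0 = 0.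
  by getS (NM 1%N 0%N); lra.
have e11 : ml N 1 0 * ml M 0 1 + ml N 1 1 * ml M 1 1 + ml N 1 2 * ml M 2 1 = 1.
  by getS (NM 1%N 1%N); lra.
have f00 : ml M 0 0 * ml N 0 0 + ml M 0 1 * ml N 1 0 + ml M 0 2 * ml N 2 0 = 1.
  by getS (MN 0%N 0%N); lra.
have f01 : ml M 0 0 * ml N 0 1 + ml M 0 1 * ml N 1 1 + ml M 0 2 * ml N 2 1 = 0.
  by getS (MN 0%N 1%N); lra.
have f10 : ml M 1 0 * ml N 0 0 + ml M 1 1 * ml N 1 0 + ml M 1 2 * ml N 2 0 = 0.
  by getS (MN 1%N 0%N); lra.
have f11 : ml M 1 0 * ml N 0 1 + ml M 1 1 * ml N 1 1 + ml M 1 2 * ml N 2 1 = 1.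
  by getS (MN 1%N 1%N); lra.
have z21 : ml M 2 1 = 0.
  have I : ml M 2 1 * (ml N 0 0 * ml M 0 0 + ml N 0 1 * ml M 1 0 + ml N 0 2 * ml M 2 0)
     - ml M 2 0 * (ml N 0 0 * ml M 0 1 + ml N 0 1 * ml M 1 1 + ml N 0 2 * ml M 2 1)
     = ml N 0 0 * (ml M 0 0 * ml M 2 1 - ml M 2 0 * ml M 0 1)
       + ml N 0 1 * (ml M 1 0 * ml M 2 1 - ml M 2 0 * ml M 1 1) by ring.
  by rewrite e00 e01 m1 m2 !subrr !mulr0 addr0 mulr1 subr0 in I.
have z20 : ml M 2 0 = 0.
  have I : ml M 2 1 * (ml N 1 0 * ml M 0 0 + ml N 1 1 * ml M 1 0 + ml N 1 2 * ml M 2 0)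
     - ml M 2 0 * (ml N 1 0 * ml M 0 1 + ml N 1 1 * ml M 1 1 + ml N 1 2 * ml M 2 1)
     = ml N 1 0 * (ml M 0 0 * ml M 2 1 - ml M 2 0 * ml M 0 1)
       + ml N 1 1 * (ml M 1 0 * ml M 2 1 - ml M 2 0 * ml M 1 1) by ring.
  rewrite e10 e11 m1 m2 !subrr !mulr0 addr0 mulr1 sub0r in I.
  by apply/eqP; rewrite -oppr_eq0 I.
have w21 : ml N 2 1 = 0.
  have I : ml N 2 1 * (ml M 0 0 * ml N 0 0 + ml M 0 1 * ml N 1 0 + ml M 0 2 * ml N 2 0)
     - ml N 2 0 * (ml M 0 0 * ml N 0 1 + ml M 0 1 * ml N 1 1 + ml M 0 2 * ml N 2 1)
     = ml M 0 0 * (ml N 0 0 * ml N 2 1 - ml N 2 0 * ml N 0 1)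
       + ml M 0 1 * (ml N 1 0 * ml N 2 1 - ml N 2 0 * ml N 1 1) by ring.
  by rewrite f00 f01 n1 n2 !subrr !mulr0 addr0 mulr1 subr0 in I.
have w20 : ml N 2 0 = 0.
  have I : ml N 2 1 * (ml M 1 0 * ml N 0 0 + ml M 1 1 * ml N 1 0 + ml M 1 2 * ml N 2 0)
     - ml N 2 0 * (ml M 1 0 * ml N 0 1 + ml M 1 1 * ml N 1 1 + ml M 1 2 * ml N 2 1)
     = ml M 1 0 * (ml N 0 0 * ml N 2 1 - ml N 2 0 * ml N 0 1)
       + ml M 1 1 * (ml N 1 0 * ml N 2 1 - ml N 2 0 * ml N 1 1) by ring.
  rewrite f10 f11 n1 n2 !subrr !mulr0 addr0 mulr1 sub0r in I.
  by apply/eqP; rewrite -oppr_eq0 I.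
have s0 : ml M 2 2 != 0.
  have e22 : ml N 2 2 * ml M 2 2 = 1 by getS (NM 2%N 2%N); lra.
  by apply/eqP => h; move: e22; rewrite h mulr0 => /eqP; rewrite eq_sym oner_eq0.
have D0 : ml M 0 0 * ml M 1 1 - ml M 0 1 * ml M 1 0 != 0.
  have I : (ml N 0 0 * ml N 1 1 - ml N 0 1 * ml N 1 0) * (ml M 0 0 * ml M 1 1 - ml M 0 1 * ml M 1 0)
    = (ml N 0 0 * ml M 0 0 + ml N 0 1 * ml M 1 0 + ml N 0 2 * ml M 2 0) * (ml N 1 0 * ml M 0 1 + ml N 1 1 * ml M 1 1 + ml N 1 2 * ml M 2 1)
    - (ml N 0 0 * ml M 0 1 + ml N 0 1 * ml M 1 1 + ml N 0 2 * ml M 2 1) * (ml N 1 0 * ml M 0 0 + ml N 1 1 * ml M 1 0 + ml N 1 2 * ml M 2 0).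
    by rewrite z20 z21; ring.
  rewrite e00 e01 e10 e11 mulr1 mulr0 subr0 in I.
  by apply/eqP => h; move: I; rewrite h mulr0 => /eqP; rewrite eq_sym oner_eq0.
have [ha hb] := core H z20 z21 s0 D0.
have e0 : ml M 0 0 = M ord0 ord0 by rewrite /ml; congr (M _ _); apply: val_inj; rewrite /= inordK.
by rewrite -e0.
Qed.
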